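(* Let $(\mathcal{X},\kappa)$ be a finite similarity space with Gram matrix $\mathbf{K}$, let $\mathcal{Y}$ be a finite set, and let $(X,Y)$ be a random pair with values in $\mathcal{X}\times\mathcal{Y}$, with marginal law $\mathbb{P}_y$ of $Y$. Then for any such kernel $\kappa$, $$\mathbb{H}^{\mathbf{K},\mathbf{I}}[X\mid Y]=\mathbb{E}_{y\sim\mathbb{P}_y}\big[\mathbb{H}^{\mathbf{K}}[X\mid Y=y]\big].$$
   Context: A finite similarity space $(\mathcal{X},\kappa)$ is a finite set with a symmetric $\kappa:\mathcal{X}\times\mathcal{X}\to[0,1]$ with $\kappa(x,x)=1$; its Gram matrix is $\mathbf{K}_{x,y}=\kappa(x,y)$. For a distribution $\mathbb{P}$ on $\mathcal{X}$, $(\mathbf{K}\mathbb{P})(x)=\sum_y\kappa(x,y)\mathbb{P}(y)$ and the GAIT entropy is $\mathbb{H}^{\mathbf{K}}[\mathbb{P}]=-\sum_x\mathbb{P}(x)\log(\mathbf{K}\mathbb{P})(x)$ (with $0\log0=0$). $\mathbf{I}$ denotes the identity kernel on $\mathcal{Y}$ ($\iota(y,y')=1$ if $y=y'$, else $0$). For kernels $\kappa$ on $\mathcal{X}$ and $\lambda$ on $\mathcal{Y}$ with Gram matrices $\mathbf{K},\mathbf{\Lambda}$, the joint entropy $\mathbb{H}^{\mathbf{K}\otimes\mathbf{\Lambda}}[X,Y]$ is the GAIT entropy of the joint law of $(X,Y)$ with respect to the product kernel $\kappa(x,x')\lambda(y,y')$, and the conditional entropy is $\mathbb{H}^{\mathbf{K},\mathbf{\Lambda}}[X\mid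 Y]=\mathbb{H}^{\mathbf{K}\otimes\mathbf{\Lambda}}[X,Y]-\mathbb{H}^{\mathbf{\Lambda}}[Y]$. $\mathbb{H}^{\mathbf{K}}[X\mid Y=y]$ denotes the GAIT entropy of the conditional law of $X$ given $Y=y$. *)

(* Defs.v *)
From mathcomp Require Import all_boot all_order all_algebra.
From mathcomp Require Import reals exp.
Set Implicit Arguments. Unset Strict Implicit. Unset Printing Implicit Defensive.
Import Order.TTheory GRing.Theory Num.Theory.
Local Open Scope ring_scope.

Section GAIT.
Variable R : realType.

Definition similarity_kernel (T : finType) (k : T -> T -> R) : Prop :=
  (forall x y, k x y = k y x) /\ (forall x y, 0 <= k x y <= 1) /\ (forall x, k x x = 1).

Definition is_distr (T : finType) (P : T -> R) : Prop :=
  (forall x, 0 <= P x) /\ \sum_(x : T) P x = 1.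

Definition Kmul (T : finType) (k : T -> T -> R) (P : T -> R) (x : T) : R :=
  \sum_(y : T) k x y * P y.

Definition gait_entropy (T : finType) (k : T -> T -> R) (P : T -> R) : R :=
  - \sum_(x : T) (if P x == 0 then 0 else P x * ln (Kmul k P x)).

Definition id_kernel (T : finType) (y y' : T) : R := if y == y' then 1 else 0.

Definition prod_kernel (X Y : finType) (k : X -> X -> R) (l : Y -> Y -> R)
  (u v : X * Y) : R := k u.1 v.1 * l u.2 v.2.

Definition marginal2 (X Y : finType) (P : X * Y -> R) (y : Y) : R :=
  \sum_(x : X) P (x, y).

Definition cond_law (X Y : finType) (P : X * Y -> R) (y : Y) (x : X) : R :=
  P (x, y) / marginal2 P y.

Definition gait_cond_entropy (X Y : finType) (k : X -> X -> R) (l : Y -> Y -> R)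
  (P : X * Y -> R) : R :=
  gait_entropy (prod_kernel k l) P - gait_entropy l (marginal2 P).

End GAIT.

(* Main.v *)
Require Import Defs.
From mathcomp Require Import all_boot all_order all_algebra.
From mathcomp Require Import reals exp.
From mathcomp Require Import ring lra.
Import Order.TTheory GRing.Theory Num.Theory.
Local Open Scope ring_scope.

Lemma sum_idk (R : realType) (Y : finType) (y : Y) (F : Y -> R) :
  \sum_(j : Y) @id_kernel R Y y j * F j = F y.
Proof.
rewrite (bigD1 y) //= big1 ?addr0; first by rewrite /id_kernel eqxx mul1r.
by move=> j /negbTE hj; rewrite /id_kernel eq_sym hj mul0r.
Qed.

Lemma sum_pair (R : realType) (X Y : finType) (F : X * Y -> R) :
  \sum_(v : X * Y) F v = \sum_(x : X) \sum_(y : Y) F (x, y).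
Proof. by rewrite pair_bigA; apply: eq_bigr => -[]. Qed.

Theorem theorem4 (R : realType) (X Y : finType) (k : X -> X -> R)
  (P : X * Y -> R) :
  similarity_kernel k -> is_distr P ->
  gait_cond_entropy k (@id_kernel R Y) P =
  \sum_(y : Y) marginal2 P y * gait_entropy k (cond_law P y).
Proof.
move=> [ksym [kb kd]] [P0 P1].
set A := fun x y => \sum_(x' : X) k x x' * P (x', y).
have KA : forall x y, Kmul (prod_kernel k (@id_kernel R Y)) P (x, y) = A x y.
  move=> x y; rewrite /Kmul sum_pair.
  apply: eq_bigr => x' _; rewrite /prod_kernel /=.
  under eq_bigr => j _ do rewrite -mulrA.
  by rewrite -mulr_sumr (sum_idk R Y y (fun j => P (x', j))).
have Km : forall y, Kmul (@id_kernel R Y) (marginal2 P) y = marginal2 P y.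
  by move=> y; rewrite /Kmul sum_idk.
have PA : forall x y, P (x, y) <= A x y.
  move=> x y; rewrite /A (bigD1 x) //= kd mul1r.
  have : 0 <= \sum_(i | i != x) k x i * P (i, y).
    by apply: sumr_ge0 => i _; apply: mulr_ge0; [case/andP: (kb x i)|].
  lra.
have m0 : forall y, 0 <= marginal2 P y by move=> y; apply: sumr_ge0.
rewrite /gait_cond_entropy /gait_entropy.
rewrite sum_pair.
rewrite exchange_big /= opprK -sumrN -big_split /=.
apply: eq_bigr => y _; rewrite Km.
have [my0|myn0] := eqVneq (marginal2 P y) 0.
  rewrite my0 mul0r addr0 big1 ?oppr0 // => x _.
  have Pz : P (x, y) = 0.
    apply/eqP; rewrite eq_le P0 andbT -my0 /marginal2 (bigD1 x) //= lerDl.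
    by apply: sumr_ge0.
  by rewrite Pz eqxx.
have mpos : 0 < marginal2 P y by rewrite lt_def myn0 m0.
set m := marginal2 P y.
have -> : m * ln m = \sum_(x : X) (if P (x, y) == 0 then 0 else P (x, y) * ln m).
  rewrite /m /marginal2 mulr_suml; apply: eq_bigr => x _.
  by case: eqP => [->|]; rewrite ?mul0r.
rewrite mulrN mulr_sumr -!sumrN -big_split /=; apply: eq_bigr => x _.
rewrite /cond_law -/m.
case: eqP => [->|Pn]; first by rewrite mul0r eqxx mulr0 oppr0 addr0.
have Pp : 0 < P (x, y) by rewrite lt_def P0 andbT; apply/eqP.
have -> : (P (x, y) / m == 0) = false.
  by apply/negbTE; rewrite mulf_neq0 ?invr_eq0 //; apply/eqP.
have -> : Kmul k (fun x0 => P (x0, y) / m) x = A x y / m.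
  by rewrite /Kmul /A mulr_suml; apply: eq_bigr => i _; rewrite mulrA.
rewrite KA ln_div ?posrE //; last by apply: lt_le_trans (PA x y).
by rewrite mulrA (mulrC m) divfK // mulrBr opprB addrC.
Qed.
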